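(* Let $m>0$, $\gamma>0$, $c_k=k^{-(1+\alpha\beta)}$, $\lambda_k=k^{-\beta}$ ($k\geq1$), with $\alpha>1$, $\beta>\frac1{\alpha-1}$ and $\frac12<s<\frac{(\alpha-1)\beta}2$. Let $\Phi\in C^\infty(\mathbb{R})$ satisfy $\int_{\mathbb{R}}|\Phi'|e^{-\Phi}dx<\infty$ and $b(\Phi(x)+1)\geq x^2$ for some $b>0$ and all $x$. For $N\in\mathbb{N}$ define $\Theta(\cdot;s,N):\mathcal{H}_{-s}\to\mathbb{R}$ by $$\Theta(X;s,N)=\frac1m\Phi(x)+\frac12v^2+\frac1{2m}\sum_{k=1}^Nz_k^2+\frac12\sum_{k>N}k^{-2s}z_k^2.$$ Then there exists $N=N(m,\gamma,\alpha,\beta,s)\in\mathbb{N}$ sufficiently large such that, for some $a>0$, $\Theta(X):=\Theta(X;s,N)$ satisfies $$\sup_{X\in\mathcal{H}_{-s}}\mathcal{L}\Theta(X)\leq a.$$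
   Context: $\mathcal{H}_{-s}$ is the Hilbert space of real sequences $X=(x,v,z_1,z_2,\dots)$ with $\|X\|_{-s}^2=x^2+v^2+\sum_{k\geq1}k^{-2s}z_k^2<\infty$. For smooth $\varphi$, $\mathcal L\varphi(X)=v\partial_x\varphi+\big(-\tfrac\gamma mv-\tfrac1m\Phi'(x)-\tfrac1m\sum_{k\geq1}\sqrt{c_k}z_k\big)\partial_v\varphi+\sum_{k\geq1}(-\lambda_kz_k+\sqrt{c_k}v)\partial_{z_k}\varphi+\tfrac{\gamma}{m^2}\partial_v^2\varphi+\sum_{k\geq1}\lambda_k\partial_{z_k}^2\varphi$, the generator of the system $dx=v\,dt$, $m\,dv=(-\gamma v-\Phi'(x)-\sum_k\sqrt{c_k}z_k)dt+\sqrt{2\gamma}dW_0$, $dz_k=(-\lambda_kz_k+\sqrt{c_k}v)dt+\sqrt{2\lambda_k}dW_k$. *)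

(* Defs.v *)
From Stdlib Require Import Reals.
From Coquelicot Require Import Coquelicot.
Open Scope R_scope.

(* Convention: a point X = (x, v, z_1, z_2, ...) of H_{-s} is represented by
   x v : R and z : nat -> R with  z n  standing for  z_{n+1}  (n >= 0),
   i.e. index k = S n.  *)

Definition wgt (s : R) (n : nat) : R := Rpower (INR (S n)) (-(2 * s)).

Definition ck (alpha beta : R) (n : nat) : R := Rpower (INR (S n)) (-(1 + alpha * beta)).
Definition lamk (beta : R) (n : nat) : R := Rpower (INR (S n)) (- beta).

Definition in_Hs (s : R) (z : nat -> R) : Prop :=
  ex_series (fun n => wgt s n * (z n) ^ 2).

Definition upd (z : nat -> R) (n : nat) (t : R) : nat -> R :=
  fun j => if Nat.eqb j n then t else z j.

Definition Theta (m s : R) (N : nat) (Phi : R -> R)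
    (x v : R) (z : nat -> R) : R :=
  Phi x / m + v ^ 2 / 2
  + Series (fun n => if Nat.ltb n N then (z n) ^ 2 / (2 * m)
                     else wgt s n * (z n) ^ 2 / 2).

Definition gen (m gamma alpha beta : R) (Phi : R -> R)
    (phi : R -> R -> (nat -> R) -> R) (x v : R) (z : nat -> R) : R :=
  v * Derive (fun t => phi t v z) x
  + (- (gamma / m) * v - (1 / m) * Derive Phi x
     - (1 / m) * Series (fun n => sqrt (ck alpha beta n) * z n))
    * Derive (fun t => phi x t z) v
  + Series (fun n => (- lamk beta n * z n + sqrt (ck alpha beta n) * v)
                     * Derive (fun t => phi x v (upd z n t)) (z n))
  + gamma / m ^ 2 * Derive_n (fun t => phi x t z) 2 v
  + Series (fun n => lamk beta n * Derive_n (fun t => phi x v (upd z n t)) 2 (z n)).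

(* Main.v *)
Require Import Defs.
From Stdlib Require Import Reals Lra Psatz.
From Coquelicot Require Import Coquelicot.
Open Scope R_scope.

Lemma ex_series_ev (a b : nat -> R) (N : nat) :
  (forall n, (N <= n)%nat -> Rabs (a n) <= b n) -> ex_series b -> ex_series a.
Proof.
  intros H Hb. apply (proj2 (ex_series_incr_n a N)).
  apply (@ex_series_le R_AbsRing R_CompleteNormedModule _ (fun k => b (N + k)%nat)).
  - intro n. apply H. lia.
  - apply (proj1 (ex_series_incr_n b N)). exact Hb.
Qed.

Lemma ex_series_zero : ex_series (fun _ : nat => 0).
Proof.
  apply (@ex_series_ext R_AbsRing R_NormedModule (fun n => scal 0 (0 ^ n))).
  - intro n. unfold scal; simpl; unfold mult; simpl. ring.
  - apply (@ex_series_scal R_AbsRing R_NormedModule (0:R) (fun n => 0 ^ n)). apply ex_series_geom. rewrite Rabs_R0; lra.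
Qed.

Lemma Series_zero : Series (fun _ : nat => 0) = 0.
Proof. rewrite (Series_ext _ (fun n => 0 * 0)). rewrite Series_scal_l. ring. intro; ring. Qed.

Lemma delta_ex (n : nat) (c : R) : ex_series (fun j => if Nat.eqb j n then c else 0).
Proof.
  apply (ex_series_ev _ (fun _ => 0) (S n)).
  - intros k Hk. destruct (Nat.eqb_spec k n). lia. rewrite Rabs_R0; lra.
  - apply ex_series_zero.
Qed.

Lemma delta_Series (n : nat) (c : R) : Series (fun j => if Nat.eqb j n then c else 0) = c.
Proof.
  rewrite Series_incr_n_aux with (n := n).
  2:{ intros k Hk. destruct (Nat.eqb_spec k n). lia. reflexivity. }
  rewrite Series_incr_1.
  - rewrite (Series_ext _ (fun _ => 0)). rewrite Series_zero.
    replace (n + 0)%nat with n by lia. rewrite Nat.eqb_refl. ring.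
    intro k. destruct (Nat.eqb_spec (n + S k) n). lia. reflexivity.
  - apply (proj1 (ex_series_incr_n (fun j => if Nat.eqb j n then c else 0) n)). apply delta_ex.
Qed.

Lemma Series_nonneg (a : nat -> R) : (forall n, 0 <= a n) -> ex_series a -> 0 <= Series a.
Proof. intros H Ha. rewrite <- Series_zero. apply Series_le; auto. intro n; split; [lra| apply H]. Qed.

Lemma amgm (a z k : R) : 0 < k -> a * z - k * z ^ 2 <= a ^ 2 / (4 * k).
Proof. intros Hk.
  assert (a ^ 2 / (4 * k) - (a * z - k * z ^ 2) = (a - 2 * k * z) ^ 2 / (4 * k)) by (field; lra).
  assert (0 <= (a - 2 * k * z) ^ 2 / (4 * k)). apply Rdiv_le_0_compat. apply pow2_ge_0. lra. lra. Qed.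

Lemma amgm2 (t y w : R) : 0 < w -> 2 * t * y <= t ^ 2 / w + w * y ^ 2.
Proof. intros Hw.
  assert (t ^ 2 / w + w * y ^ 2 - 2 * t * y = (t - w * y) ^ 2 / w) by (field; lra).
  assert (0 <= (t - w * y) ^ 2 / w). apply Rdiv_le_0_compat. apply pow2_ge_0. lra. lra. Qed.

Lemma key_ineq (d k : R) : 0 < d -> 1 <= k ->
  d * exp (-(1 + d) * ln (k + 1)) <= exp (- d * ln k) - exp (- d * ln (k + 1)).
Proof.
  intros Hd Hk. set (A := ln k). set (B := ln (k + 1)).
  assert (E1 : exp (A - B) = k / (k + 1)).
  { unfold Rminus. rewrite exp_plus, exp_Ropp. unfold A, B. rewrite !exp_ln by lra. field. lra. }
  assert (H1 : 1 + (A - B) <= k / (k + 1)) by (rewrite <- E1; apply exp_ineq1_le).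
  assert (E2 : exp (- B) = / (k + 1)) by (rewrite exp_Ropp; unfold B; rewrite exp_ln; lra).
  assert (H2 : B - A >= / (k + 1)).
  { assert (k / (k + 1) = 1 - / (k+1)) by (field; lra). lra. }
  assert (E3 : exp (- d * A) = exp (- d * B) * exp (d * (B - A))).
  { rewrite <- exp_plus. f_equal. ring. }
  assert (H3 : 1 + d * (B - A) <= exp (d * (B - A))) by apply exp_ineq1_le.
  assert (E4 : exp (-(1 + d) * B) = exp (- d * B) * exp (- B)).
  { rewrite <- exp_plus. f_equal. ring. }
  rewrite E3, E4, E2.
  assert (P : 0 < exp (- d * B)) by apply exp_pos.
  assert (P2 : 0 < / (k + 1)) by (apply Rinv_0_lt_compat; lra).
  assert (d * / (k + 1) <= d * (B - A)) by (apply Rmult_le_compat_l; lra).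
  assert (exp (- d * B) * (d * / (k+1)) <= exp (- d * B) * (exp (d * (B - A)) - 1)).
  { apply Rmult_le_compat_l; lra. }
  nra.
Qed.

Lemma pseries (d : R) : 0 < d -> ex_series (fun n => exp (-(1 + d) * ln (INR (S n)))).
Proof.
  intros Hd. set (r := fun n => exp (-(1 + d) * ln (INR (S n)))).
  set (f := fun n => exp (- d * ln (INR (S n)))).
  assert (Hb : forall N, sum_f_R0 r N <= 1 + (1 - f N) / d).
  { induction N.
    - simpl. unfold r, f. simpl. rewrite ln_1. rewrite !Rmult_0_r, exp_0. unfold Rdiv. lra.
    - simpl. assert (K := key_ineq d (INR (S N)) Hd).
      assert (1 <= INR (S N)) by (apply (le_INR 1); lia).
      specialize (K H).
      replace (INR (S N) + 1) with (INR (S (S N))) in K by (rewrite (S_INR (S N)); ring).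
      fold (r (S N)) in K. fold (f N) (f (S N)) in K.
      apply (Rmult_le_compat_r (/ d)) in K; [|left; apply Rinv_0_lt_compat; lra].
      replace (d * r (S N) * / d) with (r (S N)) in K by (field; lra).
      unfold Rdiv in *. nra. }
  apply ex_series_Reals_1.
  apply growing_cv.
  - intro n. simpl. assert (0 < r (S n)) by apply exp_pos. lra.
  - exists (1 + 1 / d). intros x [i ->]. eapply Rle_trans. apply Hb.
    assert (0 < f i) by apply exp_pos. unfold Rdiv.
    assert (0 < / d) by (apply Rinv_0_lt_compat; lra). nra.
Qed.

Definition LL (n : nat) : R := ln (INR (S n)).

Lemma LL_ge0 n : 0 <= LL n.
Proof. unfold LL. rewrite <- ln_1. apply ln_le. lra. apply (le_INR 1); lia. Qed.

Lemma exp_le1 x : x <= 0 -> exp x <= 1.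
Proof. intros H. rewrite <- exp_0. destruct (Req_dec x 0). subst; lra.
  left; apply exp_increasing; lra. Qed.

Lemma wgt_pos s n : 0 < wgt s n. Proof. unfold wgt, Rpower. apply exp_pos. Qed.
Lemma wgt_le1 s n : 0 <= s -> wgt s n <= 1.
Proof. intros. unfold wgt, Rpower. apply exp_le1. pose proof (LL_ge0 n). unfold LL in *. nra. Qed.
Lemma lamk_pos b n : 0 < lamk b n. Proof. unfold lamk, Rpower. apply exp_pos. Qed.
Lemma lamk_le1 b n : 0 <= b -> lamk b n <= 1.
Proof. intros. unfold lamk, Rpower. apply exp_le1. pose proof (LL_ge0 n). unfold LL in *. nra. Qed.
Lemma ck_pos a b n : 0 < ck a b n. Proof. unfold ck, Rpower. apply exp_pos. Qed.

Lemma ratio a b s n : ck a b n / (lamk b n * wgt s n) = exp (-(1 + (a * b - b - 2 * s)) * LL n).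
Proof.
  unfold ck, lamk, wgt, Rpower, LL.
  set (L := ln (INR (S n))).
  replace (-(1 + (a * b - b - 2 * s)) * L) with (-(1 + a * b) * L + (- (-b * L) + - (-(2*s) * L))) by ring.
  rewrite !exp_plus, !exp_Ropp. field. split; apply Rgt_not_eq; apply exp_pos.
Qed.

Definition eN (N : nat) (m s : R) (n : nat) : R := if Nat.ltb n N then 1 / m else wgt s n.

Lemma eN_pos N m s n : 0 < m -> 0 < eN N m s n.
Proof. intros. unfold eN. destruct (Nat.ltb n N). apply Rdiv_lt_0_compat; lra. apply wgt_pos. Qed.

Lemma exs_plus (a b : nat -> R) : ex_series a -> ex_series b -> ex_series (fun n => a n + b n).
Proof. intros. exact (@ex_series_plus R_AbsRing R_NormedModule a b H H0). Qed.
Lemma exs_scal (c : R) (a : nat -> R) : ex_series a -> ex_series (fun n => c * a n).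
Proof. intros. exact (@ex_series_scal R_AbsRing R_NormedModule c a H). Qed.
Lemma exs_minus (a b : nat -> R) : ex_series a -> ex_series b -> ex_series (fun n => a n - b n).
Proof. intros. exact (@ex_series_minus R_AbsRing R_NormedModule a b H H0). Qed.

Lemma summand_eq N m s z j : 0 < m ->
  (if Nat.ltb j N then (z j) ^ 2 / (2 * m) else wgt s j * (z j) ^ 2 / 2)
  = eN N m s j * (z j) ^ 2 / 2.
Proof. intros. unfold eN. destruct (Nat.ltb j N); field; lra. Qed.

Lemma summand_ex N m s z : 0 < m -> in_Hs s z ->
  ex_series (fun j => if Nat.ltb j N then (z j) ^ 2 / (2 * m) else wgt s j * (z j) ^ 2 / 2).
Proof.
  intros Hm Hz. apply (ex_series_ev _ (fun j => /2 * (wgt s j * (z j) ^ 2)) N).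
  - intros n Hn. destruct (Nat.ltb_spec n N). lia.
    pose proof (wgt_pos s n). rewrite Rabs_right. lra.
    apply Rle_ge. apply Rmult_le_pos. apply Rmult_le_pos; [lra|apply pow2_ge_0]. lra.
  - apply exs_scal. exact Hz.
Qed.

Lemma Theta_upd m s N Phi x v z n t : 0 < m -> in_Hs s z ->
  Theta m s N Phi x v (upd z n t) =
  Theta m s N Phi x v z - eN N m s n * (z n) ^ 2 / 2 + eN N m s n * t ^ 2 / 2.
Proof.
  intros Hm Hz. unfold Theta.
  set (U := fun j => if Nat.ltb j N then (z j) ^ 2 / (2 * m) else wgt s j * (z j) ^ 2 / 2).
  assert (HS : Series (fun j => if Nat.ltb j N then (upd z n t j) ^ 2 / (2 * m) else wgt s j * (upd z n t j) ^ 2 / 2)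
     = Series U + (eN N m s n * t ^ 2 / 2 - eN N m s n * (z n) ^ 2 / 2)).
  { rewrite (Series_ext _ (fun j => U j + (if Nat.eqb j n then eN N m s n * t ^ 2 / 2 - eN N m s n * (z n) ^ 2 / 2 else 0))).
    - rewrite Series_plus. rewrite delta_Series. reflexivity.
      apply summand_ex; auto. apply delta_ex.
    - intro j. unfold U, upd. destruct (Nat.eqb_spec j n).
      + subst j. unfold eN; destruct (Nat.ltb n N); field; lra.
      + ring. }
  rewrite HS. unfold U. ring.
Qed.

Lemma D_quad K e y : Derive (fun t => K + e * t ^ 2 / 2) y = e * y.
Proof. apply is_derive_unique. auto_derive. auto. field. Qed.

Lemma D2_quad K e y : Derive_n (fun t => K + e * t ^ 2 / 2) 2 y = e.
Proof. simpl. rewrite (Derive_ext _ (fun t => e * t)). 2: intro; apply D_quad.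
  apply is_derive_unique. auto_derive. auto. ring. Qed.

Lemma Dz1 m s N Phi x v z n : 0 < m -> in_Hs s z ->
  Derive (fun t => Theta m s N Phi x v (upd z n t)) (z n) = eN N m s n * z n.
Proof. intros. rewrite (Derive_ext _ (fun t => (Theta m s N Phi x v z - eN N m s n * (z n) ^ 2 / 2) + eN N m s n * t ^ 2 / 2)).
  apply D_quad. intro; apply Theta_upd; auto. Qed.

Lemma Dz2 m s N Phi x v z n : 0 < m -> in_Hs s z ->
  Derive_n (fun t => Theta m s N Phi x v (upd z n t)) 2 (z n) = eN N m s n.
Proof. intros. rewrite (Derive_n_ext _ (fun t => (Theta m s N Phi x v z - eN N m s n * (z n) ^ 2 / 2) + eN N m s n * t ^ 2 / 2)).
  apply D2_quad. intro; apply Theta_upd; auto. Qed.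

Lemma Theta_v m s N Phi x t z : Theta m s N Phi x t z =
  (Phi x / m + Series (fun n => if Nat.ltb n N then (z n) ^ 2 / (2 * m) else wgt s n * (z n) ^ 2 / 2)) + 1 * t ^ 2 / 2.
Proof. unfold Theta. lra. Qed.

Lemma Dv1 m s N Phi x v z : Derive (fun t => Theta m s N Phi x t z) v = v.
Proof. rewrite (Derive_ext _ _ _ (fun t => Theta_v m s N Phi x t z)). rewrite D_quad. ring. Qed.

Lemma Dv2 m s N Phi x v z : Derive_n (fun t => Theta m s N Phi x t z) 2 v = 1.
Proof. rewrite (Derive_n_ext _ _ _ _ (fun t => Theta_v m s N Phi x t z)). apply D2_quad. Qed.

Lemma Dx m s N Phi x v z : 0 < m -> ex_derive Phi x ->
  Derive (fun t => Theta m s N Phi t v z) x = Derive Phi x / m.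
Proof. intros Hm HP. apply is_derive_unique. unfold Theta. auto_derive. auto. unfold Rdiv. rewrite Rmult_1_l. reflexivity. Qed.

Definition pf m alpha beta s n :=
  ck alpha beta n * (wgt s n - 1 / m) ^ 2 / (4 * (lamk beta n * wgt s n)).
Definition qf N m alpha beta s n :=
  ck alpha beta n * (eN N m s n - 1 / m) ^ 2 / (4 * (lamk beta n * eN N m s n)).

Lemma qf_eq N m alpha beta s n :
  qf N m alpha beta s n = if Nat.ltb n N then 0 else pf m alpha beta s n.
Proof. unfold qf, pf, eN. destruct (Nat.ltb n N).
  replace (1 / m - 1 / m) with 0 by ring. unfold Rdiv. ring. reflexivity. Qed.

Lemma pf_eq m alpha beta s n : 0 < m ->
  pf m alpha beta s n = (wgt s n - 1 / m) ^ 2 / 4 * exp (-(1 + (alpha * beta - beta - 2 * s)) * LL n).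
Proof. intros. rewrite <- ratio. unfold pf. pose proof (lamk_pos beta n). pose proof (wgt_pos s n).
  field. lra. Qed.

Lemma pf_nonneg m alpha beta s n : 0 < m -> 0 <= pf m alpha beta s n.
Proof. intros. rewrite pf_eq by auto. apply Rmult_le_pos. apply Rmult_le_pos. apply pow2_ge_0. lra.
  left; apply exp_pos. Qed.

Lemma pf_ex m alpha beta s : 0 < m -> 0 < s -> 0 < alpha * beta - beta - 2 * s ->
  ex_series (pf m alpha beta s).
Proof.
  intros Hm Hs Hd.
  apply (ex_series_ev _ (fun n => (1 + 1 / m ^ 2) / 4 * exp (-(1 + (alpha * beta - beta - 2 * s)) * LL n)) 0).
  - intros n _. rewrite Rabs_pos_eq by (apply pf_nonneg; auto). rewrite pf_eq by auto.
    apply Rmult_le_compat_r. left; apply exp_pos.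
    pose proof (wgt_pos s n). pose proof (wgt_le1 s n ltac:(lra)).
    assert (0 < 1 / m) by (apply Rdiv_lt_0_compat; lra).
    assert ((1 / m) ^ 2 = 1 / m ^ 2) by (field; lra).
    nra.
  - apply exs_scal. unfold LL. apply pseries. auto.
Qed.

Lemma Ybound l w zz v A B : 0 < l <= 1 -> 0 < w <= 1 -> 0 <= zz -> Rabs A <= B ->
  Rabs (-(l * (w * zz)) + v * w * A) <= w * zz + Rabs v * B.
Proof. intros. eapply Rle_trans; [apply Rabs_triang|]. rewrite Rabs_Ropp, !Rabs_mult.
  rewrite (Rabs_pos_eq l) by lra. rewrite (Rabs_pos_eq w) by lra. rewrite (Rabs_pos_eq zz) by lra.
  pose proof (Rabs_pos v). pose proof (Rabs_pos A).
  assert (0 <= (1 - l) * (w * zz)) by (apply Rmult_le_pos; nra).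
  assert (0 <= Rabs v * ((1 - w) * Rabs A)) by (apply Rmult_le_pos; [lra| apply Rmult_le_pos; lra]).
  assert (Rabs v * Rabs A <= Rabs v * B) by (apply Rmult_le_compat_l; lra).
  nra. Qed.

Lemma A_bound alpha beta s n zn : 0 < beta ->
  Rabs (sqrt (ck alpha beta n) * zn) <=
  / 2 * (exp (-(1 + (alpha * beta - beta - 2 * s)) * LL n) + wgt s n * zn ^ 2).
Proof.
  intros Hb. rewrite <- ratio. set (c := ck alpha beta n). set (l := lamk beta n). set (w := wgt s n).
  assert (Hc : 0 < c) by apply ck_pos. assert (Hl : 0 < l) by apply lamk_pos.
  assert (Hl1 : l <= 1) by (apply lamk_le1; lra). assert (Hw : 0 < w) by apply wgt_pos.
  rewrite Rabs_mult, (Rabs_pos_eq (sqrt c)) by apply sqrt_pos.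
  pose proof (amgm2 (sqrt c) (Rabs zn) w Hw) as H. rewrite pow2_sqrt in H by lra. rewrite pow2_abs in H.
  assert (E : c / w = c / (l * w) * l) by (field; lra).
  assert (c / (l * w) * l <= c / (l * w) * 1).
  { apply Rmult_le_compat_l. apply Rlt_le, Rdiv_lt_0_compat; nra. lra. }
  lra.
Qed.

Theorem proposition5p3 (m gamma alpha beta s : R)
  (hm : 0 < m) (hg : 0 < gamma) (ha : 1 < alpha) (hb : 1 / (alpha - 1) < beta)
  (hs1 : 1 / 2 < s) (hs2 : s < (alpha - 1) * beta / 2) :
  exists N : nat,
  forall Phi : R -> R,
    (forall (n : nat) (x : R), ex_derive_n Phi n x) ->
    ex_RInt_gen (fun x => Rabs (Derive Phi x) * exp (- Phi x))
      (Rbar_locally m_infty) (Rbar_locally p_infty) ->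
    (exists b : R, 0 < b /\ forall x : R, b * (Phi x + 1) >= x ^ 2) ->
    exists a : R, 0 < a /\
      forall (x v : R) (z : nat -> R), in_Hs s z ->
        gen m gamma alpha beta Phi (Theta m s N Phi) x v z <= a.
Proof.
  assert (Hbeta : 0 < beta).
  { assert (0 < 1 / (alpha - 1)) by (apply Rdiv_lt_0_compat; lra). lra. }
  assert (Hs : 0 < s) by lra.
  assert (Hd : 0 < alpha * beta - beta - 2 * s).
  { assert ((alpha - 1) * beta = alpha * beta - beta) by ring. lra. }
  set (d := alpha * beta - beta - 2 * s) in *.
  assert (Hgm : 0 < gamma / m) by (apply Rdiv_lt_0_compat; lra).
  pose proof (pf_ex m alpha beta s hm Hs Hd) as Hpex.
  pose proof (proj1 (is_series_Reals _ _) (Series_correct _ Hpex) (gamma / m) Hgm) as [M0 HM0].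
  specialize (HM0 M0 (le_n _)). unfold Rdist in HM0. apply Rabs_def2 in HM0.
  set (N := S M0).
  assert (Hqex : ex_series (qf N m alpha beta s)).
  { apply (ex_series_ev _ (pf m alpha beta s) N).
    - intros n Hn. rewrite qf_eq. destruct (Nat.ltb_spec n N). lia.
      rewrite Rabs_pos_eq by (apply pf_nonneg; auto). lra.
    - exact Hpex. }
  assert (HqS : Series (qf N m alpha beta s) <= gamma / m).
  { rewrite (Series_incr_n _ N) by (unfold N; lia || auto).
    rewrite (Series_incr_n (pf m alpha beta s) N) in HM0 by (unfold N; lia || auto).
    unfold N in *; simpl pred in *.
    rewrite sum_eq_R0.
    2:{ intros k Hk. rewrite qf_eq. destruct (Nat.ltb_spec k (S M0)). reflexivity. lia. }
    rewrite (Series_ext _ (fun k => pf m alpha beta s (S M0 + k))).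
    lra.
    intro k. rewrite qf_eq. destruct (Nat.ltb_spec (S M0 + k) (S M0)). lia. reflexivity. }
  exists N. intros Phi HPhi _ _.
  set (S3 := Series (fun n => lamk beta n * eN N m s n)).
  exists (gamma / m ^ 2 + Rabs S3 + 1). split.
  { assert (0 < gamma / m ^ 2) by (apply Rdiv_lt_0_compat; nra). pose proof (Rabs_pos S3). lra. }
  intros x v z Hz.
  assert (HD : ex_derive Phi x) by exact (HPhi 1%nat x).
  unfold gen. rewrite Dx by auto. rewrite Dv1, Dv2.
  set (A := fun n => sqrt (ck alpha beta n) * z n).
  set (Y := fun n => (- lamk beta n * z n + sqrt (ck alpha beta n) * v) * (eN N m s n * z n)).
  assert (E2 : Series (fun n => (- lamk beta n * z n + sqrt (ck alpha beta n) * v)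
        * Derive (fun t => Theta m s N Phi x v (upd z n t)) (z n)) = Series Y).
  { apply Series_ext. intro n. unfold Y. rewrite Dz1; auto. }
  assert (E3 : Series (fun n => lamk beta n * Derive_n (fun t => Theta m s N Phi x v (upd z n t)) 2 (z n)) = S3).
  { apply Series_ext. intro n. rewrite Dz2; auto. }
  rewrite E2, E3.
  set (r := fun n => exp (-(1 + d) * LL n)).
  assert (Hr : ex_series r) by (unfold r, LL; apply pseries; auto).
  assert (HA : ex_series A).
  { apply (ex_series_ev _ (fun n => / 2 * (r n + wgt s n * z n ^ 2)) 0).
    - intros n _. unfold A, r, d. apply A_bound. auto.
    - apply (exs_scal (/2) (fun n => r n + wgt s n * z n ^ 2)). apply (exs_plus r); auto. }
  assert (HY : ex_series Y).
  { apply (ex_series_ev _ (fun n => wgt s n * z n ^ 2 + Rabs v * (/ 2 * (r n + wgt s n * z n ^ 2))) N).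
    - intros n Hn. unfold Y. unfold eN. destruct (Nat.ltb_spec n N). lia.
      replace ((- lamk beta n * z n + sqrt (ck alpha beta n) * v) * (wgt s n * z n))
        with (-(lamk beta n * (wgt s n * z n ^ 2)) + v * wgt s n * A n) by (unfold A; ring).
      apply Ybound.
      + split. apply lamk_pos. apply lamk_le1; lra.
      + split. apply wgt_pos. apply wgt_le1; lra.
      + apply pow2_ge_0.
      + unfold A, r, d. apply A_bound. auto.
    - apply (exs_plus (fun n => wgt s n * z n ^ 2)). exact Hz.
      apply (exs_scal (Rabs v) (fun n => / 2 * (r n + wgt s n * z n ^ 2))).
      apply (exs_scal (/2) (fun n => r n + wgt s n * z n ^ 2)). apply (exs_plus r); auto. }
  set (E := fun n => - (v / m) * A n + Y n).
  assert (HE : ex_series E) by (apply (exs_plus (fun n => - (v / m) * A n) Y); [apply exs_scal; auto| auto]).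
  assert (ES : - (1 / m) * Series A * v + Series Y = Series E).
  { unfold E. rewrite Series_plus. rewrite Series_scal_l. field. lra.
    apply (exs_scal (- (v / m)) A); auto. auto. }
  assert (EL : Series E <= v ^ 2 * Series (qf N m alpha beta s)).
  { rewrite <- Series_scal_l.
    assert (0 <= Series (fun n => v ^ 2 * qf N m alpha beta s n - E n)).
    { apply Series_nonneg.
      - intro n. unfold E, Y, A, qf.
        set (c := ck alpha beta n). set (l := lamk beta n). set (e := eN N m s n).
        assert (Hc : 0 <= c) by (left; apply ck_pos).
        assert (Hk : 0 < l * e) by (apply Rmult_lt_0_compat; [apply lamk_pos| apply eN_pos; auto]).
        pose proof (amgm (sqrt c * (e - 1 / m) * v) (z n) (l * e) Hk) as H.
        assert (Hsq : sqrt c ^ 2 = c) by (apply pow2_sqrt; auto).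
        assert (X1 : (sqrt c * (e - 1 / m) * v) ^ 2 / (4 * (l * e)) = v ^ 2 * (c * (e - 1 / m) ^ 2 / (4 * (l * e)))).
        { replace ((sqrt c * (e - 1 / m) * v) ^ 2) with (sqrt c ^ 2 * ((e - 1 / m) ^ 2 * v ^ 2)) by ring.
          rewrite Hsq. field.
          assert (0 < l) by apply lamk_pos. assert (0 < e) by (apply eN_pos; auto).
          split; [lra| split; lra]. }
        assert (X2 : - (v / m) * (sqrt c * z n) + (- l * z n + sqrt c * v) * (e * z n)
           = sqrt c * (e - 1 / m) * v * z n - l * e * z n ^ 2) by (field; lra).
        rewrite X2. lra.
      - apply (exs_minus (fun n => v ^ 2 * qf N m alpha beta s n) E); auto.
        apply (exs_scal (v ^ 2) (qf N m alpha beta s)). auto. }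
    rewrite Series_minus in H. lra.
    apply (exs_scal (v ^ 2) (qf N m alpha beta s)). auto. auto. }
  assert (v ^ 2 * Series (qf N m alpha beta s) <= v ^ 2 * (gamma / m)).
  { apply Rmult_le_compat_l. apply pow2_ge_0. auto. }
  pose proof (Rle_abs S3).
  assert (Eq : v * (Derive Phi x / m) + (- (gamma / m) * v - 1 / m * Derive Phi x - 1 / m * Series A) * v
     + Series Y + gamma / m ^ 2 * 1 + S3 = - (gamma / m) * v ^ 2 + (- (1 / m) * Series A * v + Series Y) + gamma / m ^ 2 + S3)
    by (field; lra).
  rewrite Eq, ES.
  assert (gamma / m * v ^ 2 = v ^ 2 * (gamma / m)) by ring.
  lra.
Qed.
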